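(* Let $(B,\lfloor\cdot,\cdot\rfloor)$ be an SSD space with associated quadratic form $q$, and let $A\subset B$ be a maximally $q$-positive set which is convex. Then $A$ is an affine subset of $B$.
   Context: An SSD (symmetrically self-dual) space is a pair $(B,\lfloor\cdot,\cdot\rfloor)$ where $B$ is a nonzero real vector space and $\lfloor\cdot,\cdot\rfloor:B\times B\to\mathbb{R}$ is a symmetric bilinear form; its quadratic form is $q(b)=\frac12\lfloor b,b\rfloor$. A nonempty set $A\subset B$ is $q$-positive if $q(b-c)\ge 0$ for all $b,c\in A$. A set is maximally $q$-positive if it is $q$-positive and not properly contained in any other $q$-positive set. *)

(* Defs.v *)
From HB Require Import structures.
From mathcomp Require Import all_boot all_order all_algebra.
From mathcomp Require Import boolp classical_sets reals.
Set Implicit Arguments. Unset Strict Implicit. Unset Printing Implicit Defensive.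
Import Order.TTheory GRing.Theory Num.Theory.
Local Open Scope ring_scope.
Local Open Scope classical_set_scope.

Definition symmetric_bilinear (R : realType) (B : lmodType R)
  (bf : B -> B -> R) : Prop :=
  (forall a b, bf a b = bf b a) /\
  (forall (c : R) (a a' b : B), bf (c *: a + a') b = c * bf a b + bf a' b).

Definition SSD_space (R : realType) (B : lmodType R) (bf : B -> B -> R) : Prop :=
  (exists b : B, b != 0) /\ symmetric_bilinear bf.

Definition qform (R : realType) (B : lmodType R) (bf : B -> B -> R) (b : B) : R :=
  2^-1 * bf b b.

Definition q_positive (R : realType) (B : lmodType R) (bf : B -> B -> R)
  (A : set B) : Prop :=
  A !=set0 /\ (forall b c, A b -> A c -> 0 <= qform bf (b - c)).

Definition maximally_q_positive (R : realType) (B : lmodType R)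
  (bf : B -> B -> R) (A : set B) : Prop :=
  q_positive bf A /\ (forall A' : set B, q_positive bf A' -> A `<=` A' -> A' = A).

Definition convex_set (R : realType) (B : lmodType R) (A : set B) : Prop :=
  forall (a b : B) (t : R), A a -> A b -> 0 <= t -> t <= 1 ->
    A (t *: a + (1 - t) *: b).

Definition affine_set (R : realType) (B : lmodType R) (A : set B) : Prop :=
  forall (a b : B) (t : R), A a -> A b -> A (t *: a + (1 - t) *: b).

(* Main.v *)
Require Import Defs.
From HB Require Import structures.
From mathcomp Require Import all_boot all_order all_algebra.
From mathcomp Require Import boolp classical_sets reals.
From mathcomp Require Import ring lra.
Set Implicit Arguments. Unset Strict Implicit. Unset Printing Implicit Defensive.
Import Order.TTheory GRing.Theory Num.Theory.
Local Open Scope ring_scope.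
Local Open Scope classical_set_scope.

Lemma bf0l (R : realType) (B : lmodType R) (bf : B -> B -> R) :
  symmetric_bilinear bf -> forall b, bf 0 b = 0.
Proof.
move=> [_ H] b. have := H 1 0 0 b. rewrite scale1r addr0 mul1r => E.
by have := congr1 (fun r => r - bf 0 b) E; rewrite subrr addrK => <-.
Qed.

Lemma bfZl (R : realType) (B : lmodType R) (bf : B -> B -> R) :
  symmetric_bilinear bf -> forall c a b, bf (c *: a) b = c * bf a b.
Proof.
move=> hb c a b; have := (proj2 hb) c a 0 b.
by rewrite addr0 (bf0l hb) addr0.
Qed.

Lemma qZ (R : realType) (B : lmodType R) (bf : B -> B -> R) :
  symmetric_bilinear bf -> forall m v, qform bf (m *: v) = m ^+ 2 * qform bf v.
Proof.
move=> hb m v; rewrite /qform (bfZl hb) (proj1 hb) (bfZl hb).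
rewrite expr2; set t := bf v v; ring.
Qed.

Lemma qN (R : realType) (B : lmodType R) (bf : B -> B -> R) :
  symmetric_bilinear bf -> forall v, qform bf (- v) = qform bf v.
Proof.
move=> hb v; rewrite -scaleN1r (qZ hb). by rewrite sqrrN expr1n mul1r.
Qed.

Theorem mainTheorem1 (R : realType) (B : lmodType R) (bf : B -> B -> R)
  (A : set B) :
  SSD_space bf -> maximally_q_positive bf A -> convex_set A -> affine_set A.
Proof.
move=> [_ hb] [[hne hpos] hmax] hconv a b s Aa Ab.
set c := s *: a + (1 - s) *: b.
have key : forall x, A x -> 0 <= qform bf (c - x).
  move=> x Ax.
  have [s0|s0] := leP 0 s; last first.
    set m := 1 - s.
    have m0 : 0 < m by rewrite /m; lra.
    have mn : m != 0 by rewrite gt_eqF.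
    set u := m^-1.
    have u0 : 0 <= u by rewrite /u invr_ge0 ltW.
    have u1 : u <= 1 by rewrite /u invr_le1 // ?unitfE //; rewrite /m; lra.
    have Az := hconv _ _ _ Ax Aa u0 u1.
    have E : c - x = m *: (b - (u *: x + (1 - u) *: a)).
      rewrite scalerBr scalerDr !scalerA /u mulfV // mulrBr mulr1 mulfV //.
      rewrite scale1r /c /m opprD addrA addrAC.
      congr (_ - _).
      rewrite addrC; congr (_ + _).
      by rewrite -scaleNr; congr (_ *: _); lra.
    rewrite E (qZ hb) mulr_ge0 ?sqr_ge0 //.
    by apply: hpos.
  have [s1|s1] := leP s 1.
    have Ac : A c by apply: hconv.
    exact: hpos.
  set u := s^-1.
  have sn : s != 0 by rewrite gt_eqF //; lra.
  have u0 : 0 <= u by rewrite /u invr_ge0.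
  have u1 : u <= 1 by rewrite /u invr_le1 // ?unitfE //; lra.
  have Az := hconv _ _ _ Ax Ab u0 u1.
  have E : c - x = s *: (a - (u *: x + (1 - u) *: b)).
    rewrite scalerBr scalerDr !scalerA /u mulfV // mulrBr mulr1 mulfV //.
    rewrite scale1r /c opprD addrA addrAC.
    congr (_ - _).
    congr (_ + _).
    by rewrite -scaleNr; congr (_ *: _); lra.
  rewrite E (qZ hb) mulr_ge0 ?sqr_ge0 //.
  by apply: hpos.
have qp : q_positive bf (A `|` [set c]).
  split; first by case: hne => x Ax; exists x; left.
  move=> y z [Ay|->] [Az|->].
  - exact: hpos.
  - by rewrite -opprB (qN hb); apply: key.
  - exact: key.
  - by rewrite subrr /qform (bf0l hb) mulr0.
have := hmax _ qp (@subsetUl _ A [set c]).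
by move=> EA; rewrite -EA; right.
Qed.
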